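(* Let $d\ge2$, $\alpha\in[0,1]$, $|\phi_+\rangle=d^{-1/2}\sum_{i=1}^d|i\rangle\otimes|i\rangle$, and $\rho=\alpha\,\mathbb I/d^2+(1-\alpha)|\phi_+\rangle\langle\phi_+|$ on $\mathbb C^d\otimes\mathbb C^d$. Let $p_n=\mathrm{Tr}[(\rho^{T_A})^n]$. Then $p_3<p_2^2$ if and only if $\rho^{T_A}$ has a negative eigenvalue (which happens exactly when $\alpha<d/(d+1)$).
   Context: The partial transpose on the first factor $A$ is defined in the computational product basis by $(|k_A,k_B\rangle\langle l_A,l_B|)^{T_A}=|l_A,k_B\rangle\langle k_A,l_B|$. *)

(* Defs.v *)
From mathcomp Require Import all_boot all_order all_algebra.
From mathcomp Require Import mxtens.
Set Implicit Arguments. Unset Strict Implicit. Unset Printing Implicit Defensive.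
Import Order.TTheory GRing.Theory Num.Theory.
Local Open Scope ring_scope.

(* Scalars: any numerically closed field C (e.g. the complex numbers).
   The space C^d (x) C^d is indexed by 'I_(d*d) with the product basis
   |k_A,k_B> <-> mxtens_index (k_A, k_B). *)

Section Defs.
Variable C : numClosedFieldType.

(* partial transpose on the first factor:
   (|kA,kB><lA,lB|)^{T_A} = |lA,kB><kA,lB|, extended linearly, i.e.
   (M^{T_A})_{(kA,kB),(lA,lB)} = M_{(lA,kB),(kA,lB)}. *)
Definition ptA (d : nat) (M : 'M[C]_(d * d)) : 'M[C]_(d * d) :=
  \matrix_(i, j)
    M (mxtens_index ((mxtens_unindex j).1, (mxtens_unindex i).2))
      (mxtens_index ((mxtens_unindex i).1, (mxtens_unindex j).2)).

Definition phi_plus (d : nat) : 'cV[C]_(d * d) :=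
  (sqrtC (d%:R : C))^-1 *: \sum_(i < d) delta_mx (mxtens_index (i, i)) 0.

Definition adjmx m n (A : 'M[C]_(m, n)) : 'M[C]_(n, m) := (map_mx Num.conj A)^T.

Definition rho_iso (d : nat) (alpha : C) : 'M[C]_(d * d) :=
  (alpha / (d%:R ^+ 2)) *: 1%:M
  + (1 - alpha) *: (phi_plus d *m adjmx (phi_plus d)).

Definition pmoment (d : nat) (alpha : C) (n : nat) : C :=
  \tr (ptA (rho_iso d alpha) ^+ n).

End Defs.

(* Main.v *)
Require Import Defs.
From mathcomp Require Import all_boot all_order all_algebra.
From mathcomp Require Import mxtens.
From mathcomp Require Import fingroup perm.
From mathcomp Require Import ring.
Import Order.TTheory GRing.Theory Num.Theory.
Local Open Scope ring_scope.

Section Aux.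
Variable C : numClosedFieldType.
Variable d : nat.

Notation idx := (@mxtens_index d d).

Definition swf (k : 'I_(d * d)) : 'I_(d * d) :=
  idx ((mxtens_unindex k).2, (mxtens_unindex k).1).

Lemma swfK : involutive swf.
Proof. by move=> k; rewrite /swf mxtens_indexK; exact: (mxtens_unindexK k). Qed.

Definition sw : 'S_(d * d) := perm (inv_inj swfK).

Definition Fm : 'M[C]_(d * d) := perm_mx sw.

Lemma idx_eq (p q : 'I_d * 'I_d) : (idx p == idx q) = (p == q).
Proof. exact: (inj_eq (can_inj (@mxtens_indexK d d))). Qed.

Lemma FmE i1 i2 j1 j2 :
  Fm (idx (i1, i2)) (idx (j1, j2)) = ((i2 == j1) && (i1 == j2))%:R.
Proof.
rewrite /Fm /perm_mx /row_perm !mxE permE /swf mxtens_indexK /=.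
by rewrite idx_eq xpair_eqE.
Qed.

Lemma FmFm : Fm *m Fm = 1%:M.
Proof.
rewrite /Fm -perm_mxM -perm_mx1; congr perm_mx.
by apply/permP => k; rewrite permM !permE swfK.
Qed.

Lemma trFm : \tr Fm = d%:R.
Proof.
rewrite /mxtrace (reindex idx) /=; last first.
  by exists (@mxtens_unindex d d) => k _; [rewrite mxtens_indexK | rewrite mxtens_unindexK].
have -> : \sum_j Fm (idx j) (idx j) = \sum_a \sum_b Fm (idx (a, b)) (idx (a, b)).
  by rewrite pair_big; apply: eq_bigr => -[a b].
transitivity (\sum_(a < d) (1 : C)); last by rewrite sumr_const card_ord.
apply: eq_bigr => a _; rewrite (bigD1 a) //= FmE eqxx /= big1 ?addr0 //.
by move=> b /negbTE nb; rewrite FmE nb.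
Qed.

Lemma phiE p q :
  phi_plus C d (idx (p, q)) 0 = (sqrtC (d%:R : C))^-1 * (p == q)%:R.
Proof.
rewrite /phi_plus !mxE summxE; congr (_ * _).
case: (eqVneq p q) => [<-|npq].
  rewrite (bigD1 p) //= mxE idx_eq eqxx /= big1 ?addr0 // => a nap.
  by rewrite mxE idx_eq xpair_eqE andbb eq_sym (negbTE nap).
rewrite big1 // => a _; rewrite mxE idx_eq xpair_eqE.
by case: (eqVneq p a) => [<-|] //=; rewrite eq_sym (negbTE npq).
Qed.


Lemma sumdE p q :
  (\sum_(i < d) delta_mx (idx (i, i)) 0 : 'cV[C]_(d * d)) (idx (p, q)) 0 = (p == q)%:R.
Proof.
rewrite summxE.
case: (eqVneq p q) => [<-|npq].
  rewrite (bigD1 p) //= mxE idx_eq eqxx /= big1 ?addr0 // => a nap.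
  by rewrite mxE idx_eq xpair_eqE andbb eq_sym (negbTE nap).
rewrite big1 // => a _; rewrite mxE idx_eq xpair_eqE.
by case: (eqVneq p a) => [<-|] //=; rewrite eq_sym (negbTE npq).
Qed.

Lemma conj_sq : (0 < d)%N -> (sqrtC (d%:R : C))^-1 * ((sqrtC (d%:R : C))^-1)^* = (d%:R)^-1.
Proof.
move=> d0.
rewrite conj_Creal; last by apply: ger0_real; rewrite invr_ge0 sqrtC_ge0 ler0n.
by rewrite -invrM ?unitfE ?sqrtC_eq0 ?pnatr_eq0 -?lt0n // -expr2 sqrtCK.
Qed.

Lemma ptA_rho (a : C) : (0 < d)%N ->
  ptA (rho_iso d a) = (a / (d%:R ^+ 2)) *: 1%:M + ((1 - a) / d%:R) *: Fm.
Proof.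
move=> d0; apply/matrixP => i j.
case: i / (mxtens_indexP i) => i1 i2; case: j / (mxtens_indexP j) => j1 j2.
rewrite /ptA /rho_iso !mxE !mxtens_indexK /= big_ord1 !mxE. rewrite permE /swf mxtens_indexK /= !idx_eq !xpair_eqE.
rewrite !sumdE rmorphM rmorph_nat mulrACA conj_sq // -natrM mulnb (eq_sym j1 i1) (eq_sym j1 i2).
by rewrite mulrA.
Qed.

Lemma mulXY (a b c e : C) :
  (a *: 1%:M + b *: Fm) *m (c *: 1%:M + e *: Fm)
  = (a * c + b * e) *: 1%:M + (a * e + b * c) *: Fm.
Proof.
rewrite mulmxDl !mulmxDr -!scalemxAl -!scalemxAr !mul1mx !mulmx1 FmFm !scalerA.
rewrite !scalerDl (mulrC b c) (mulrC b e) .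
by rewrite -!addrA; congr (_ + _); rewrite [RHS]addrC -addrA.
Qed.

Lemma trXY (a b : C) : \tr (a *: 1%:M + b *: Fm) = a * (d * d)%:R + b * d%:R.
Proof. by rewrite mxtraceD !mxtraceZ mxtrace1 trFm. Qed.

Lemma delta_Fm (k : 'I_(d * d)) : (delta_mx 0 k : 'rV[C]_(d * d)) *m Fm = delta_mx 0 (sw k).
Proof.
apply/matrixP => i j; rewrite !mxE (bigD1 k) //= big1 ?addr0.
  by rewrite !mxE !eqxx /= !ord1 eqxx /= mul1r eq_sym.
by move=> l nlk; rewrite !mxE (negbTE nlk) andbF mul0r.
Qed.

Lemma eig_sq (x y lam : C) (v : 'rV[C]_(d * d)) :
  v *m (x *: 1%:M + y *: Fm) = lam *: v -> v != 0 -> (lam - x) ^+ 2 = y ^+ 2.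
Proof.
move=> Hv nv0.
set w := v *m Fm.
have E1 : y *: w = (lam - x) *: v.
  by move: Hv; rewrite mulmxDr -!scalemxAr mulmx1 => Hv; rewrite scalerBl -Hv [_ + y *: _]addrC addrK.
have E2 : y *: v = (lam - x) *: w.
  by rewrite /w scalemxAl -E1 -scalemxAl -mulmxA FmFm mulmx1.
have : ((lam - x) ^+ 2 - y ^+ 2) *: v = 0.
  by rewrite scalerBl !expr2 -!scalerA -E1 E2 !scalerA mulrC subrr.
by move/eqP; rewrite scaler_eq0 (negbTE nv0) orbF subr_eq0 => /eqP.
Qed.

End Aux.

Theorem mainTheorem5 (C : numClosedFieldType) (d : nat) (alpha : C) :
  (2 <= d)%N -> 0 <= alpha <= 1 ->
  (pmoment d alpha 3 < pmoment d alpha 2 ^+ 2 <->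
     exists2 lam : C, eigenvalue (ptA (rho_iso d alpha)) lam & lam < 0)
  /\
  ((exists2 lam : C, eigenvalue (ptA (rho_iso d alpha)) lam & lam < 0) <->
     alpha < d%:R / (d%:R + 1)).
Proof.
move=> d2 /andP[a0 a1].
have d0 : (0 < d)%N by apply: leq_trans d2.
set D : C := d%:R.
have D0 : 0 < D by rewrite ltr0n.
have D1 : 1 <= D by rewrite ler1n.
have DD0 : D * D != 0 by rewrite mulf_neq0 // lt0r_neq0.
set x : C := alpha / (D ^+ 2).
set y : C := (1 - alpha) / D.
have HP : ptA (rho_iso d alpha) = x *: 1%:M + y *: Fm C d by apply: ptA_rho.
have x0 : 0 <= x by rewrite divr_ge0 // exprn_ge0 // ltW.
have y0 : 0 <= y by rewrite divr_ge0 ?subr_ge0 // ltW.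
have ar : alpha \is Num.real by apply: ger0_real.
have Dr : D \is Num.real by apply: realn.
have xr : x \is Num.real by apply: ger0_real.
have yr : y \is Num.real by apply: ger0_real.
set v := x - y.
have vr : v \is Num.real by rewrite rpredB.
have u0 : 0 < x + y.
  have -> : x + y = (alpha + D * (1 - alpha)) / (D * D) by rewrite /x /y; field; rewrite lt0r_neq0.
  rewrite divr_gt0 ?mulr_gt0 //.
  apply: (lt_le_trans (ltr01 : (0:C) < 1)).
  have E : alpha + (1 - alpha) = 1 by rewrite addrC subrK.
  by rewrite -[X in X <= _]E lerD2l ler_peMl // subr_ge0.
have vC : v < 0 <-> alpha < D / (D + 1).
  rewrite ltr_pdivlMr ?addr_gt0 // -[alpha * _ < _]subr_lt0 -(pmulr_llt0 v (mulr_gt0 D0 D0)).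
  have -> : v * (D * D) = alpha * (D + 1) - D.
    by rewrite /v /x /y; field; rewrite lt0r_neq0.
  by [].
have vB : (exists2 lam : C, eigenvalue (ptA (rho_iso d alpha)) lam & lam < 0) <-> v < 0.
  split.
    move=> [lam /eigenvalueP [w Hw nw0] lam0]; rewrite HP in Hw.
    have := @eig_sq C d _ _ _ _ Hw nw0; move/eqP; rewrite -subr_eq0 subr_sqr mulf_eq0.
    case/orP => H.
      have Hl : lam = x + y by apply/eqP; rewrite -subr_eq0 opprD addrA.
      by move: lam0; rewrite Hl => /lt_trans /(_ u0); rewrite ltxx.
    have Hl : lam = v by apply/eqP; rewrite -subr_eq0 /v opprB addrA addrAC.
    by rewrite -Hl.
  move=> vlt; exists v => //; apply/eigenvalueP.
  pose i0 : 'I_d := Ordinal d0.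
  pose i1 : 'I_d := Ordinal d2.
  pose k01 := @mxtens_index d d (i0, i1).
  pose k10 := @mxtens_index d d (i1, i0).
  exists ((delta_mx 0 k01 : 'rV[C]_(d * d)) - delta_mx 0 k10).
    rewrite HP mulmxDr -!scalemxAr mulmx1 mulmxBl !delta_Fm.
    have -> : sw d k01 = k10 by rewrite permE /swf mxtens_indexK.
    have -> : sw d k10 = k01 by rewrite permE /swf mxtens_indexK.
    by rewrite -(opprB (delta_mx 0 k01)) scalerN /v scalerBl.
  apply/eqP => /matrixP /(_ 0 k01); rewrite !mxE !eqxx /= !idx_eq xpair_eqE.
  have -> : (i0 == i1) = false by [].
  by move/eqP; rewrite subr0 oner_eq0.
split; last by split => [/vB/vC|/vC/vB].
rewrite vB.
have E2 : pmoment d alpha 2 = (x * x + y * y) * (D * D) + (x * y + y * x) * D.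
  by rewrite /pmoment HP expr2 -mulmxE mulXY trXY natrM.
have E3 : pmoment d alpha 3 =
   (x * (x * x + y * y) + y * (x * y + y * x)) * (D * D)
   + (x * (x * y + y * x) + y * (x * x + y * y)) * D.
  by rewrite /pmoment HP exprS expr2 -!mulmxE mulXY mulXY trXY natrM.
have Hp1 : x * (D * D) + y * D = 1 by rewrite /x /y; field; rewrite lt0r_neq0.
have key : pmoment d alpha 3 - pmoment d alpha 2 ^+ 2
    = (D * D * (D * D - 1) * (x + y) * y ^+ 2) * v.
  rewrite -[X in X - _ = _]mul1r -{1}Hp1 E2 E3 /v; ring.
have K0 : 0 < D * D - 1.
  rewrite subr_gt0 -natrM ltr1n.
  by rewrite (leq_trans d2) // leq_pmull.
rewrite -subr_lt0 key.
split => [H|vlt].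
  have [//|vge] := real_ltP vr (rpred0 _).
  have Mge : 0 <= D * D * (D * D - 1) * (x + y) * y ^+ 2.
    exact: mulr_ge0 (mulr_ge0 (mulr_ge0 (ltW (mulr_gt0 D0 D0)) (ltW K0)) (ltW u0)) (exprn_ge0 2 y0).
  by have := le_lt_trans (mulr_ge0 Mge vge) H; rewrite ltxx.
have ypos : 0 < y by apply: (le_lt_trans x0); rewrite -subr_lt0.
by rewrite pmulr_rlt0 // (mulr_gt0 (mulr_gt0 (mulr_gt0 (mulr_gt0 D0 D0) K0) u0) (exprn_gt0 2 ypos)).
Qed.
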